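(* Let $k\ge 1$ and $m_1,d_1,\dots,d_k$ be positive integers, let $\mathbf d=(m_1,d_1,\dots,d_k,1)$ and $\gamma>0$. For each pair of positive integers $(a,b)$ let $\|\cdot\|_*$ be a norm on $\mathbb{R}^{a\times b}$. Let $\mathcal{N}^{k,\mathbf d}_{\gamma_*\le\gamma}$ be the class of all functions $f:\mathbb{R}^{m_1}\to\mathbb{R}$ of the form $f=T_{k+1}\circ\sigma\circ T_k\circ\cdots\circ\sigma\circ T_1$, where $T_i:\mathbb{R}^{d_{i-1}}\to\mathbb{R}^{d_i}$ (with $d_0=m_1$, $d_{k+1}=1$) is given by $T_i(u)=\tilde V_i^T(1,u^T)^T$ for some $\tilde V_i\in\mathbb{R}^{(d_{i-1}+1)\times d_i}$, and $\gamma_*:=\prod_{i=1}^{k+1}\|\tilde V_i\|_*\le\gamma$. Then for every $n\ge1$ and every sample $S=\{x_1,\dots,x_n\}\subseteq\mathbb{R}^{m_1}$, $$\widehat{\mathfrak{R}}_S\big(\mathcal{N}^{k,\mathbf d}_{\gamma_*\le\gamma}\big)=\infty.$$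
   Context: $\sigma(u)=\max(u,0)$ for $u\in\mathbb{R}$, applied coordinatewise to vectors. For a class $\mathcal F$ of real-valued functions and a sample $S=\{x_1,\dots,x_n\}$, the empirical Rademacher complexity is $\widehat{\mathfrak{R}}_S(\mathcal F)=\mathbb{E}_\epsilon\big[\sup_{f\in\mathcal F}\frac1n\sum_{i=1}^n\epsilon_i f(x_i)\big]$, where $\epsilon_1,\dots,\epsilon_n$ are i.i.d. uniform on $\{-1,+1\}$. *)

(* Defs.v *)
From Stdlib Require Import Reals Lra List ClassicalEpsilon.
Import ListNotations.
Open Scope R_scope.

Definition relu (u : R) : R := Rmax u 0.

(** Vectors of R^d are represented as [nat -> R] (only coordinates < d
    matter); matrices of R^{a x b} as [nat -> nat -> R] (entries (i,j) with
    i < a, j < b matter). *)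
Definition vec := nat -> R.
Definition mat := nat -> nat -> R.

Fixpoint sumn (n : nat) (g : nat -> R) : R :=
  match n with O => 0 | S n' => sumn n' g + g n' end.

(** A norm on R^{a x b} (as a function on representatives, depending only
    on the entries inside the a x b range). *)
Definition agree (a b : nat) (A B : mat) : Prop :=
  forall i j, (i < a)%nat -> (j < b)%nat -> A i j = B i j.

Definition is_mat_norm (a b : nat) (N : mat -> R) : Prop :=
  (forall A B, agree a b A B -> N A = N B) /\
  (forall A, 0 <= N A) /\
  (forall A, N A = 0 -> agree a b A (fun _ _ => 0)) /\
  (forall c A, N (fun i j => c * A i j) = Rabs c * N A) /\
  (forall A B, N (fun i j => A i j + B i j) <= N A + N B).

Definition dim (k m1 : nat) (ds : nat -> nat) (i : nat) : nat :=
  if Nat.eqb i 0 then m1 else if Nat.eqb i (S k) then 1%nat else ds i.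

(** Affine map T(u) = Vt^T (1, u^T)^T with Vt of size (din+1) x dout:
    T(u)_j = Vt 0 j + sum_{l<din} Vt (l+1) j * u l. *)
Definition affine (din : nat) (Vt : mat) (u : vec) : vec :=
  fun j => Vt O j + sumn din (fun l => Vt (S l) j * u l).

Fixpoint hidden (k m1 : nat) (ds : nat -> nat) (V : nat -> mat) (x : vec)
  (i : nat) : vec :=
  match i with
  | O => x
  | S i' => fun j => relu (affine (dim k m1 ds i') (V (S i'))
                               (hidden k m1 ds V x i') j)
  end.

Definition network (k m1 : nat) (ds : nat -> nat) (V : nat -> mat) (x : vec) : R :=
  affine (dim k m1 ds k) (V (S k)) (hidden k m1 ds V x k) O.

Fixpoint prodn (n : nat) (g : nat -> R) : R :=
  match n with O => 1 | S n' => prodn n' g * g n' end.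

Definition gamma_star (k m1 : nat) (ds : nat -> nat)
  (norm : nat -> nat -> mat -> R) (V : nat -> mat) : R :=
  prodn (S k) (fun i => norm (S (dim k m1 ds i)) (dim k m1 ds (S i)) (V (S i))).

Definition NetClass (k m1 : nat) (ds : nat -> nat)
  (norm : nat -> nat -> mat -> R) (gamma : R) (f : vec -> R) : Prop :=
  exists V : nat -> mat,
    gamma_star k m1 ds norm V <= gamma /\
    forall x, f x = network k m1 ds V x.

Inductive ereal := Fin (r : R) | PInf | NInf.

Definition esup (E : R -> Prop) : ereal :=
  match excluded_middle_informative (exists x, E x) with
  | right _ => NInf
  | left ne =>
      match excluded_middle_informative (bound E) with
      | right _ => PInf
      | left b => Fin (proj1_sig (completeness E b ne))
      end
  end.

(** Addition on extended reals (+oo absorbing; the case +oo + -oo never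
    arises below since every sup is >= 0, the zero network being in the class). *)
Definition eadd (x y : ereal) : ereal :=
  match x, y with
  | PInf, _ | _, PInf => PInf
  | NInf, _ | _, NInf => NInf
  | Fin a, Fin b => Fin (a + b)
  end.

Definition escale (c : R) (x : ereal) : ereal :=
  match x with Fin a => Fin (c * a) | e => e end.

Fixpoint signs (n : nat) : list (list R) :=
  match n with
  | O => [[]]
  | S n' => map (cons 1) (signs n') ++ map (cons (-1)) (signs n')
  end.

Definition corr (eps : list R) (xs : list vec) (f : vec -> R) : R :=
  fold_right Rplus 0 (map (fun p => fst p * f (snd p)) (combine eps xs))
  / INR (length xs).

Definition emp_rademacher (F : (vec -> R) -> Prop) (xs : list vec) : ereal :=
  escale (/ 2 ^ length xs)
    (fold_right eadd (Fin 0)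
       (map (fun eps => esup (fun r => exists f, F f /\ r = corr eps xs f))
            (signs (length xs)))).

(* Main.v *)
Require Import Defs.
From Stdlib Require Import Reals List Lra Lia ClassicalEpsilon.
Import ListNotations.
Open Scope R_scope.

Lemma signs_head n : exists t, signs n = repeat 1 n :: t.
Proof.
  induction n as [|n [t IH]]; simpl.
  - exists []. reflexivity.
  - rewrite IH. simpl. eexists. reflexivity.
Qed.

Lemma sum_ones (xs : list vec) (c : R) :
  fold_right Rplus 0 (map (fun p => fst p * (fun _ : vec => c) (snd p))
     (combine (repeat 1 (length xs)) xs)) = INR (length xs) * c.
Proof.
  induction xs as [|x xs IH]; simpl.
  - ring.
  - rewrite IH. destruct (length xs); simpl; ring.
Qed.

Lemma sumn_zero n (u : vec) : sumn n (fun l => 0 * u l) = 0.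
Proof. induction n; simpl; [reflexivity| rewrite IHn; ring]. Qed.

Lemma sumn_zero' n (c : R) : sumn n (fun l => c * 0) = 0.
Proof. induction n; simpl; [reflexivity| rewrite IHn; ring]. Qed.

Lemma prodn_zero n g : g O = 0 -> prodn (S n) g = 0.
Proof.
  intro H. induction n; simpl in *.
  - rewrite H. ring.
  - rewrite IHn. ring.
Qed.

Theorem claim1 (k m1 : nat) (ds : nat -> nat)
  (norm : nat -> nat -> mat -> R) (gamma : R) (xs : list vec) :
  (1 <= k)%nat ->
  (0 < m1)%nat ->
  (forall i, (1 <= i <= k)%nat -> (0 < ds i)%nat) ->
  (forall a b, (0 < a)%nat -> (0 < b)%nat -> is_mat_norm a b (norm a b)) ->
  0 < gamma ->
  (1 <= length xs)%nat ->
  emp_rademacher (NetClass k m1 ds norm gamma) xs = PInf.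
Proof.
  intros Hk Hm Hds Hn Hg Hl.
  set (E := fun r => exists f, NetClass k m1 ds norm gamma f /\
                   r = corr (repeat 1 (length xs)) xs f).
  assert (Hconst : forall c, NetClass k m1 ds norm gamma (fun _ => c)).
  { intro c.
    exists (fun i => if Nat.eqb i (S k) then (fun _ _ => c) else (fun _ _ => 0)).
    split.
    - unfold gamma_star. rewrite prodn_zero; [lra|].
      simpl.
      assert (Hb : (0 < dim k m1 ds 1)%nat).
      { unfold dim. destruct k as [|k']; [lia|]. simpl. apply Hds. lia. }
      replace (match k with 0%nat => true | S _ => false end) with false
        by (destruct k as [|k']; [lia|reflexivity]).
      destruct (Hn (S (dim k m1 ds 0)) (dim k m1 ds 1) (Nat.lt_0_succ _) Hb)
        as [Hag [_ [_ [Hsc _]]]].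
      rewrite (Hag (fun _ _ => 0) (fun i j => 0 * (fun _ _ => 0) i j)).
      + rewrite Hsc. rewrite Rabs_R0. ring.
      + intros i j _ _. ring.
    - intro x. unfold network.
      assert (Hh : forall j, hidden k m1 ds
        (fun i => if Nat.eqb i (S k) then (fun _ _ => c) else (fun _ _ => 0)) x k j = 0).
      { destruct k as [|k']; [lia|]. intro j. simpl.
        destruct (Nat.eqb k' (S k')) eqn:E2.
        { apply Nat.eqb_eq in E2. lia. }
        unfold affine. rewrite sumn_zero. unfold relu. rewrite Rplus_0_l.
        unfold Rmax. destruct (Rle_dec 0 0); reflexivity. }
      unfold affine. rewrite Nat.eqb_refl.
      assert (Hs : forall n, sumn n (fun l => c * hidden k m1 ds
        (fun i => if Nat.eqb i (S k) then (fun _ _ => c) else (fun _ _ => 0)) x k l) = 0).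
      { induction n; simpl; [reflexivity|]. rewrite IHn, Hh. ring. }
      rewrite Hs. ring. }
  assert (HE : forall c, E c).
  { intro c. exists (fun _ => c). split; [apply Hconst|].
    unfold corr. rewrite sum_ones. field. apply not_0_INR. lia. }
  assert (Hesup : esup E = PInf).
  { unfold esup.
    destruct (excluded_middle_informative (exists x, E x)) as [ne|ne].
    2:{ exfalso. apply ne. exists 0. apply HE. }
    destruct (excluded_middle_informative (bound E)) as [[M HM]|nb]; [|reflexivity].
    exfalso. specialize (HM (M+1) (HE (M+1))). lra. }
  unfold emp_rademacher.
  destruct (signs_head (length xs)) as [t Ht]. rewrite Ht. simpl.
  fold E. rewrite Hesup. reflexivity.
Qed.
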